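(* Let $(\mathcal A,r)$ be a population game, $\mathcal G=(\mathcal H,\boldsymbol\eta,W)$ an undirected connected community network, and $\mathbf f$ an imitation mechanism satisfying Assumption 1. Let $\mathbf x^\bullet\in\mathcal X^\bullet\setminus\mathcal X^*$ and $\mathbf y^\bullet=\mathbf x^\bullet\mathbf 1$, and let $i\in\mathcal A$ be an action with $r_i(\mathbf y^\bullet)>r_j(\mathbf y^\bullet)$ for all $j\in\mathcal S_{\mathbf y^\bullet}$. Then there exists $\varepsilon>0$ such that for every $\mathbf x\in\mathcal X$ with $\|\mathbf x-\mathbf x^\bullet\|<\varepsilon$ and $y_i>0$ (where $\mathbf y=\mathbf x\mathbf 1$), one has $\dot y_i>0$, where $\dot y_i=\sum_{h\in\mathcal H}\dot x_{ih}$ is computed from the right-hand side of the network imitation dynamics at $\mathbf x$.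
   Context: Let $\mathcal A$ be a finite set of actions, $\mathcal Y=\{\mathbf y\in\mathbb R_+^{\mathcal A}:\mathbf 1^\top\mathbf y=1\}$, reward functions $r_i:\mathcal Y\to\mathbb R$. Community network $\mathcal G=(\mathcal H,\boldsymbol\eta,W)$: finite $\mathcal H$, $\eta_h>0$ with $\sum_h\eta_h=1$, nonnegative $W$ with positive diagonal; connected = $W$ irreducible; undirected = $W=W^\top$. $\mathcal X=\{\mathbf x\in\mathbb R_+^{\mathcal A\times\mathcal H}:\mathbf 1^\top\mathbf x=\boldsymbol\eta^\top\}$. Imitation mechanism: Lipschitz $\mathbf f:\mathcal Y\to\mathbb R_+^{\mathcal A\times\mathcal A}$. Dynamics: $$\dot x_{ih}=\sum_{j\in\mathcal A}\sum_{k\in\mathcal H}\big(x_{jh}W_{hk}x_{ik}f_{ji}(\mathbf x\mathbf 1)-x_{ih}W_{hk}x_{jk}f_{ij}(\mathbf x\mathbf 1)\big).$$ Assumption 1: $\operatorname{sgn}(f_{ij}(\mathbf y)-f_{ji}(\mathbf y))=\operatorname{sgn}(r_j(\mathbf y)-r_i(\mathbf y))$ for all $i,j,\mathbf y$. Support $\mathcal S_{\mathbf y}=\{i:y_i>0\}$. Nash equilibria: $\mathcal Y^*=\{\mathbf y\in\mathcal Y: y_i>0\Rightarrow r_i(\mathbf y)=\max_{j\in\mathcal A}r_j(\mathbf y)\}$; restricted Nash equilibria: $\mathcal Y^\bullet=\{\mathbf y\in\mathcal Y:y_i>0,y_j>0\Rightarrow r_i(\mathbf y)=r_j(\mathbf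 y)\}$; $\mathcal X^*=\{\mathbf x\in\mathcal X:\mathbf x\mathbf 1\in\mathcal Y^*\}$, $\mathcal X^\bullet=\{\mathbf x\in\mathcal X:\mathbf x\mathbf 1\in\mathcal Y^\bullet\}$. *)

(* Defs.v *)
(* Strategies/actions: finType A; communities: finType H;
   scalars: R : realType.  Vectors in R^A are functions A -> R,
   states x in R^(A x H) are functions A -> H -> R. *)
From HB Require Import structures.
From mathcomp Require Import all_boot all_order all_algebra.
From mathcomp Require Import reals.
Set Implicit Arguments. Unset Strict Implicit. Unset Printing Implicit Defensive.
Import Order.TTheory GRing.Theory Num.Theory.
Local Open Scope ring_scope.

Section Defs.
Variables (R : realType) (A H : finType).

Definition inY (y : A -> R) : Prop :=
  (forall i, 0 <= y i) /\ \sum_(i : A) y i = 1.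

Definition distY (y y' : A -> R) : R := \big[Num.max/0]_(i : A) `|y i - y' i|.
Definition distX (x x' : A -> H -> R) : R :=
  \big[Num.max/0]_(i : A) \big[Num.max/0]_(h : H) `|x i h - x' i h|.

Definition population_game (r : A -> (A -> R) -> R) : Prop :=
  forall i (y : A -> R), inY y -> forall e : R, 0 < e ->
    exists2 d : R, 0 < d & forall y', inY y' -> distY y' y < d ->
      `|r i y' - r i y| < e.

Definition community_network (eta : H -> R) (W : H -> H -> R) : Prop :=
  (forall h, 0 < eta h) /\ \sum_(h : H) eta h = 1 /\
  (forall h k, 0 <= W h k) /\ (forall h, 0 < W h h).

Definition connected_net (W : H -> H -> R) : Prop :=
  forall S : {set H}, S != set0 -> S != [set: H] ->
    exists h, exists k, [/\ h \in S, k \notin S & 0 < W h k].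

Definition undirected_net (W : H -> H -> R) : Prop := forall h k, W h k = W k h.

Definition inX (eta : H -> R) (x : A -> H -> R) : Prop :=
  (forall i h, 0 <= x i h) /\ (forall h, \sum_(i : A) x i h = eta h).

Definition aggr (x : A -> H -> R) : A -> R := fun i => \sum_(h : H) x i h.

Definition imitation_mechanism (f : (A -> R) -> A -> A -> R) : Prop :=
  (forall y, inY y -> forall i j, 0 <= f y i j) /\
  exists L : R, forall y y', inY y -> inY y' -> forall i j,
      `|f y i j - f y' i j| <= L * distY y y'.

Definition assumption1 (r : A -> (A -> R) -> R) (f : (A -> R) -> A -> A -> R) :=
  forall i j y, inY y -> Num.sg (f y i j - f y j i) = Num.sg (r j y - r i y).

Definition suppY (y : A -> R) : pred A := fun i => 0 < y i.

Definition nashY (r : A -> (A -> R) -> R) (y : A -> R) : Prop :=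
  inY y /\ forall i, 0 < y i -> forall j, r j y <= r i y.

Definition rnashY (r : A -> (A -> R) -> R) (y : A -> R) : Prop :=
  inY y /\ forall i j, 0 < y i -> 0 < y j -> r i y = r j y.

Definition nashX r eta x := inX eta x /\ nashY r (aggr x).
Definition rnashX r eta x := inX eta x /\ rnashY r (aggr x).

Definition xdot (W : H -> H -> R) (f : (A -> R) -> A -> A -> R)
    (x : A -> H -> R) (i : A) (h : H) : R :=
  \sum_(j : A) \sum_(k : H)
     (x j h * W h k * x i k * f (aggr x) j i - x i h * W h k * x j k * f (aggr x) i j).

Definition ydot W f x (i : A) : R := \sum_(h : H) xdot W f x i h.

End Defs.

(* Main.v *)
Require Import Defs.
Set Warnings "-notation-overridden,-ambiguous-paths".
From HB Require Import structures.
From mathcomp Require Import all_boot all_order all_algebra.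
From mathcomp Require Import reals ring lra.
Import Order.TTheory GRing.Theory Num.Theory.
Local Open Scope ring_scope.

Lemma fin_min_pos (R : realType) (T : finType) (P : pred T) (a : T -> R) :
  (forall t, P t -> 0 < a t) -> exists2 m : R, 0 < m & forall t, P t -> m <= a t.
Proof.
move=> ha; exists (\big[Num.min/1]_(t | P t) a t).
  elim/big_ind: _ => //.
  - by move=> u v hu hv; rewrite lt_min hu hv.

by move=> t Pt; apply: bigmin_le_cond.
Qed.

Lemma ydotE (R : realType) (A H : finType) (W : H -> H -> R) f (x : A -> H -> R) i :
  undirected_net W ->
  ydot W f x i = \sum_(k : H) x i k * \sum_(j : A)
     ((f (aggr x) j i - f (aggr x) i j) * \sum_(h : H) x j h * W h k).
Proof.
move=> Ws; rewrite /ydot /xdot.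
set F := f (aggr x).
rewrite exchange_big /=.
transitivity (\sum_(j : A) \sum_(h : H) \sum_(k : H)
                x j h * W h k * x i k * (F j i - F i j)).
  apply: eq_bigr => j _.
  under eq_bigr do rewrite sumrB.
  rewrite sumrB [X in _ - X]exchange_big /= -sumrB.
  apply: eq_bigr => h _; rewrite -sumrB; apply: eq_bigr => k _.
  rewrite (Ws h k); ring.
symmetry.
transitivity (\sum_(k : H) \sum_(j : A) \sum_(h : H)
   x i k * ((F j i - F i j) * (x j h * W h k))).
  apply: eq_bigr => k _; rewrite big_distrr; apply: eq_bigr => j _ /=.
  by rewrite mulr_sumr big_distrr.
rewrite exchange_big /=; apply: eq_bigr => j _.
rewrite exchange_big /=; apply: eq_bigr => h _.
apply: eq_bigr => k _; ring.
Qed.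

Lemma bigmax_ge0 (R : realType) (T : finType) (F : T -> R) :
  (forall t, 0 <= F t) -> 0 <= \big[Num.max/0]_(t : T) F t.
Proof.
move=> hF; elim/big_ind: _ => //.
by move=> u v hu hv; rewrite le_max hu.
Qed.

Theorem lemma1 (R : realType) (A H : finType)
  (r : A -> (A -> R) -> R) (eta : H -> R) (W : H -> H -> R)
  (f : (A -> R) -> A -> A -> R) :
  population_game r ->
  community_network eta W -> undirected_net W -> connected_net W ->
  imitation_mechanism f -> assumption1 r f ->
  forall xb : A -> H -> R,
    rnashX r eta xb -> ~ nashX r eta xb ->
  forall i : A,
    (forall j, suppY (aggr xb) j -> r j (aggr xb) < r i (aggr xb)) ->
  exists2 e : R, 0 < e &
    forall x : A -> H -> R, inX eta x -> distX x xb < e -> 0 < aggr x i ->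
      0 < ydot W f x i.
Proof.
move=> _ [etap [etas [Wnn Wd]]] Ws _ [_ [L fL]] A1 xb [[xbnn xbs] [ybY ybr]] _ i Hi.
have inYa : forall x : A -> H -> R, inX eta x -> inY (aggr x).
  move=> x [xnn xs]; rewrite /inY; split => [j|]; first by apply: sumr_ge0 => h _; exact: xnn.
  rewrite /aggr exchange_big /=.
  under eq_bigr do rewrite xs.
  exact: etas.
have xb0 : forall j h, ~ (0 < aggr xb j) -> xb j h = 0.
  move=> j h /negP; rewrite -leNgt => hj.
  have yb0 : aggr xb j = 0.
    by apply/le_anti; rewrite hj /=; apply: sumr_ge0 => *; exact: xbnn.
  exact: (psumr_eq0P (fun h _ => xbnn j h) yb0).
pose g0 := fun j => f (aggr xb) j i - f (aggr xb) i j.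
have [c0 c0p hc0] : exists2 c0 : R, 0 < c0 & forall j, 0 < aggr xb j -> c0 <= g0 j.
  apply: (@fin_min_pos R A (fun j => 0 < aggr xb j) g0) => j hj.
  have := A1 j i (aggr xb) ybY.
  rewrite (gtr0_sg (x := r i (aggr xb) - r j (aggr xb))); last by rewrite subr_gt0; exact: Hi.
  by move/eqP; rewrite sgr_cp0.
pose M0 := \sum_(j : A) `|g0 j|.
have hM0 : forall j, - M0 <= g0 j.
  move=> j; have : `|g0 j| <= M0.
    by rewrite /M0 (bigD1 j) //= lerDl; apply: sumr_ge0.
  by rewrite ler_norml => /andP[].
have M0ge : 0 <= M0 by apply: sumr_ge0.
pose Hn := \sum_(h : H) (1 : R).
pose Na := \sum_(j : A) (1 : R).
have Hnge : 0 <= Hn by apply: sumr_ge0.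
have Nage : 0 <= Na by apply: sumr_ge0.
pose L' := `|L|.
have L'ge : 0 <= L' by apply: normr_ge0.
pose c := c0 / 2.
have cp : 0 < c by rewrite divr_gt0.
pose M := M0 + 1.
have Mge : 0 <= M by rewrite addr_ge0.
pose SW := fun k => \sum_(h : H) W h k.
have SWge : forall k, 0 <= SW k by move=> k; apply: sumr_ge0 => h _.
pose ek := fun k => c * W k k * eta k / (Na * (c * W k k + M * SW k) + 1).
have Bp : forall k, 0 < Na * (c * W k k + M * SW k) + 1.
  move=> k; have : 0 <= Na * (c * W k k + M * SW k).
    by apply: mulr_ge0 => //; apply: addr_ge0; apply: mulr_ge0 => //; apply: ltW.
  lra.
have [em emp hem] : exists2 em : R, 0 < em & forall k, xpredT k -> em <= ek k.
  apply: (@fin_min_pos R H xpredT ek) => k _; rewrite /ek divr_gt0 //.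
  by rewrite mulr_gt0 // mulr_gt0.
pose m := Num.min (c0 / 2) 1.
have mp : 0 < m by rewrite lt_min ltr01 divr_gt0.
have mc : m <= c0 / 2 by rewrite ge_min lexx.
have m1 : m <= 1 by rewrite ge_min lexx orbT.
pose eL := m / (2 * (L' * Hn + 1)).
have DLp : 0 < 2 * (L' * Hn + 1).
  have : 0 <= L' * Hn by apply: mulr_ge0.
  lra.
have eLp : 0 < eL by rewrite divr_gt0.
exists (Num.min em eL); first by rewrite lt_min emp eLp.
move=> x xX dx yi.
move: (xX) => [xnn xs].
pose d := distX x xb.
have [de1 de2] : d < em /\ d < eL by move: dx; rewrite lt_min => /andP[].
have absx : forall j h, `|x j h - xb j h| <= d.
  move=> j h; rewrite /d /distX.
  apply: le_trans (le_bigmax 0 (fun j => \big[Num.max/0]_(h : H) `|x j h - xb j h|) j).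
  exact: (le_bigmax 0 (fun h => `|x j h - xb j h|) h).
have d0 : 0 <= d.
  rewrite /d /distX; apply: bigmax_ge0 => j; apply: bigmax_ge0 => h; exact: normr_ge0.
have dY : distY (aggr x) (aggr xb) <= Hn * d.
  rewrite /distY; apply: bigmax_le; first by apply: mulr_ge0.
  move=> j _; rewrite /aggr -sumrB; apply: le_trans (ler_norm_sum _ _ _) _.
  rewrite /Hn mulr_suml; apply: ler_sum => h _; rewrite mul1r; exact: absx.
have dY0 : 0 <= distY (aggr x) (aggr xb).
  by rewrite /distY; apply: bigmax_ge0 => j; exact: normr_ge0.
have Lb : L' * distY (aggr x) (aggr xb) <= m / 2.
  apply: le_trans (ler_wpM2l L'ge dY) _.
  have : d * (2 * (L' * Hn + 1)) <= m by rewrite -ler_pdivlMr // ltW.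
  have : 0 <= L' * Hn * d by rewrite mulr_ge0 // mulr_ge0.
  lra.
have LL : L * distY (aggr x) (aggr xb) <= L' * distY (aggr x) (aggr xb).
  by apply: ler_wpM2r => //; apply: ler_norm.
have gb : forall j, g0 j - m <= f (aggr x) j i - f (aggr x) i j.
  move=> j.
  have h1 := fL _ _ (inYa x xX) ybY j i.
  have h2 := fL _ _ (inYa x xX) ybY i j.
  move: h1 h2; rewrite !ler_norml => /andP[h1 _] /andP[_ h2].
  rewrite /g0; lra.
rewrite ydotE //.
have Qp : forall k, 0 < \sum_(j : A)
     ((f (aggr x) j i - f (aggr x) i j) * \sum_(h : H) x j h * W h k).
  move=> k.
  have lb : forall j, c * W k k * x j k - d * (c * W k k + M * SW k) <=
      (f (aggr x) j i - f (aggr x) i j) * \sum_(h : H) x j h * W h k.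
    move=> j.
    have D0 : 0 <= \sum_(h : H) x j h * W h k.
      by apply: sumr_ge0 => h _; apply: mulr_ge0.
    have Dk : x j k * W k k <= \sum_(h : H) x j h * W h k.
      rewrite (bigD1 k) //= lerDl; apply: sumr_ge0 => h _; exact: mulr_ge0.
    have Wk0 := Wd k.
    have xk0 := xnn j k.
    have Kge : 0 <= d * (c * W k k + M * SW k).
      by apply: mulr_ge0 => //; apply: addr_ge0; apply: mulr_ge0 => //; apply: ltW.
    have gj := gb j.
    case: (boolP (0 < aggr xb j)) => hj.
    - have gc : c <= f (aggr x) j i - f (aggr x) i j.
        have := hc0 j hj; rewrite /c; lra.
      have h1 : c * (\sum_(h : H) x j h * W h k) <=
        (f (aggr x) j i - f (aggr x) i j) * \sum_(h : H) x j h * W h k.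
        exact: ler_wpM2r.
      have h2 : c * (x j k * W k k) <= c * (\sum_(h : H) x j h * W h k).
        by apply: ler_wpM2l => //; apply: ltW.
      lra.
    - have hj' : ~ (0 < aggr xb j) by move=> hh; move: hj; rewrite hh.
      have xjd : forall h, x j h <= d.
        move=> h; have := absx j h; rewrite xb0 // subr0 ger0_norm //.
      have DM : \sum_(h : H) x j h * W h k <= d * SW k.
        rewrite /SW mulr_sumr; apply: ler_sum => h _.
        by apply: ler_wpM2r => //; exact: xjd.
      have gM : - M <= f (aggr x) j i - f (aggr x) i j.
        have := hM0 j; rewrite /M; lra.
      have h1 : 0 <= (f (aggr x) j i - f (aggr x) i j + M) *
                 \sum_(h : H) x j h * W h k.
        by apply: mulr_ge0 => //; lra.
      have h2 : M * (\sum_(h : H) x j h * W h k) <= M * (d * SW k).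
        exact: ler_wpM2l.
      have h3 : c * W k k * x j k <= c * W k k * d.
        by apply: ler_wpM2l; [apply: mulr_ge0; apply: ltW | exact: xjd].
      lra.
  apply: lt_le_trans (ler_sum _ (fun j _ => lb j)).
  rewrite sumrB -mulr_sumr xs.
  have -> : \sum_(j : A) d * (c * W k k + M * SW k) =
            d * (c * W k k + M * SW k) * Na.
    move: (d * _) => K; rewrite /Na mulr_sumr; by apply: eq_bigr => j _; rewrite mulr1.
  have dek : d < ek k by apply: lt_le_trans de1 (hem k isT).
  rewrite /ek ltr_pdivlMr ?Bp // in dek.
  have dN : 0 <= d * Na * (c * W k k + M * SW k).
    apply: mulr_ge0; first exact: mulr_ge0.
    by apply: addr_ge0; apply: mulr_ge0 => //; apply: ltW.
  move: dek dN; move: (c * W k k + M * SW k) => B; move: (c * W k k * eta k) => P.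
  move=> dek dN.
  have e1 : d * (Na * B + 1) = d * Na * B + d by ring.
  have e2 : d * B * Na = d * Na * B by ring.
  rewrite e2; rewrite e1 in dek; move: (d * Na * B) dek dN => Z dek dN.
  lra.
have [q qp hq] := @fin_min_pos R H xpredT _ (fun k _ => Qp k).
apply: lt_le_trans (_ : 0 < q * aggr x i) _; first by rewrite mulr_gt0.
rewrite /aggr mulr_sumr; apply: ler_sum => k _; rewrite mulrC.
by apply: ler_wpM2l; [exact: xnn | exact: hq].
Qed.
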